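(* There exist absolute constants $c_1,c_2>0$ such that for every $M\in\{0,1\}^{m\times n}$, $$c_1\operatorname{disc}^{+}(M)\leq \operatorname{pdisc}_0(M)\leq c_2\operatorname{disc}^{+}(M)\quad\text{and}\quad c_1\operatorname{disc}^{-}(M)\leq \operatorname{pdisc}_0(M)\leq c_2\operatorname{disc}^{-}(M).$$
   Context: For $M\in\{0,1\}^{m\times n}$, $|M|$ is the number of $1$ entries, $p=|M|/(mn)$, and for $X\subset[m]$, $Y\subset[n]$, $\operatorname{disc}(X,Y)=|M[X\times Y]|-p|X||Y|$, where $|M[X\times Y]|$ is the number of $1$ entries of the submatrix with rows $X$ and columns $Y$; $\operatorname{disc}^{+}(M)=\max_{X,Y}\operatorname{disc}(X,Y)$ and $\operatorname{disc}^{-}(M)=\max_{X,Y}(-\operatorname{disc}(X,Y))$. Further, $\operatorname{pdisc}_0(M)=\max\left(\sum_{i,j}M_{i,j}\langle v_i,w_j\rangle-p\sum_{i,j}\langle v_i,w_j\rangle\right)$, the maximum over all $v_1,\dots,v_m,w_1,\dots,w_n\in\mathbb{R}^{m+n}$ with $\|v_i\|_2\leq1$, $\|w_j\|_2\leq 1$. *)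

(* Defs.v *)
From HB Require Import structures.
From mathcomp Require Import all_boot all_order all_algebra.
From mathcomp Require Import all_classical reals.
From mathcomp Require Import Rstruct.
From Stdlib Require Import Rdefinitions.
Set Implicit Arguments. Unset Strict Implicit. Unset Printing Implicit Defensive.
Import Order.TTheory GRing.Theory Num.Theory.
Local Open Scope ring_scope.

Section Disc.
Variables (m n : nat).
Implicit Types (M : 'M[bool]_(m, n)).

Definition ones M : nat := #|[set ij : 'I_m * 'I_n | M ij.1 ij.2]|.

Definition density M : R := (ones M)%:R / (m * n)%:R.

Definition ones_sub M (X : {set 'I_m}) (Y : {set 'I_n}) : nat :=
  #|[set ij : 'I_m * 'I_n | (ij.1 \in X) && (ij.2 \in Y) && M ij.1 ij.2]|.

Definition disc M (X : {set 'I_m}) (Y : {set 'I_n}) : R :=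
  (ones_sub M X Y)%:R - density M * (#|X|)%:R * (#|Y|)%:R.

(* max over all X, Y (the pair X = Y = set0 gives 0, so the seed 0 is harmless) *)
Definition disc_plus M : R :=
  \big[Num.max/0]_(X : {set 'I_m}) \big[Num.max/0]_(Y : {set 'I_n}) disc M X Y.

Definition disc_minus M : R :=
  \big[Num.max/0]_(X : {set 'I_m}) \big[Num.max/0]_(Y : {set 'I_n}) (- disc M X Y).

Definition dotv (v w : 'rV[R]_(m + n)) : R := \sum_k v 0 k * w 0 k.

Definition pdisc0_values M : set R :=
  [set x | exists (v : 'I_m -> 'rV[R]_(m + n)) (w : 'I_n -> 'rV[R]_(m + n)),
      (forall i, dotv (v i) (v i) <= 1) /\ (forall j, dotv (w j) (w j) <= 1) /\
      x = \sum_i \sum_j (M i j)%:R * dotv (v i) (w j)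
          - density M * \sum_i \sum_j dotv (v i) (w j)]%classic.

(* the maximum (attained, by compactness) = supremum of the value set *)
Definition pdisc0 M : R := sup (pdisc0_values M).

End Disc.

(* Main.v *)
Require Import Defs.
From HB Require Import structures.
From mathcomp Require Import all_boot all_order all_algebra.
From mathcomp Require Import all_classical reals.
From mathcomp Require Import Rstruct.
From Stdlib Require Import Rdefinitions.
From mathcomp Require Import ring lra.
Set Implicit Arguments. Unset Strict Implicit. Unset Printing Implicit Defensive.
Import Order.TTheory GRing.Theory Num.Theory.
Local Open Scope ring_scope.



Section Rad.
Variable T : finType.
Definition sg (b : bool) : R := if b then 1 else -1.
Definition flip (a : T) (e : {ffun T -> bool}) : {ffun T -> bool} :=
  [ffun t => if t == a then ~~ e t else e t].
Lemma flipK a : involutive (flip a).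
Proof. by move=> e; apply/ffunP=> t; rewrite !ffunE; case: eqP => // _; rewrite negbK. Qed.

Lemma odd0 (g : {ffun T -> bool} -> R) a :
  (forall e, g (flip a e) = g e) -> \sum_e g e * sg (e a) = 0.
Proof.
move=> gI.
have H : \sum_e g e * sg (e a) = - \sum_e g e * sg (e a).
  rewrite [LHS](reindex_inj (can_inj (flipK a))) -sumrN.
  apply: eq_bigr => e _; rewrite gI ffunE eqxx /sg; case: (e a) => /=; ring.
lra.
Qed.

Definition NP : R := (#|{ffun T -> bool}|)%:R.
Lemma NP_gt0 : 0 < NP.
Proof. rewrite /NP ltr0n card_ffun card_bool expn_gt0 //. Qed.

Lemma sumc (c : R) : \sum_(e : {ffun T -> bool}) c = NP * c.
Proof. by rewrite sumr_const mulr_natl. Qed.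

Definition Xs (s : seq T) (u : T -> R) (e : {ffun T -> bool}) : R :=
  \sum_(t <- s) sg (e t) * u t.
Definition qs (s : seq T) (u : T -> R) : R := \sum_(t <- s) u t ^+ 2.

Lemma qs_ge0 s u : 0 <= qs s u.
Proof. by apply: sumr_ge0 => t _; rewrite sqr_ge0. Qed.

Lemma mom s u : uniq s ->
  \sum_e Xs s u e ^+ 2 = NP * qs s u /\ \sum_e Xs s u e ^+ 4 <= 3 * NP * qs s u ^+ 2.
Proof.
elim: s => [|a s IH] /=.
  have X0 : forall e, Xs [::] u e = 0 by move=> e; rewrite /Xs big_nil.
  under eq_bigr do rewrite X0; under [X in _ /\ X <= _]eq_bigr do rewrite X0.
  rewrite /qs big_nil !sumc; split; [ring | ].
  by rewrite !expr0n /= !mulr0.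
move=> /andP[an us]; have [IH2 IH4] := IH us.
have inv : forall e, Xs s u (flip a e) = Xs s u e.
  move=> e; apply: eq_big_seq => t ts; rewrite ffunE.
  by case: eqP => // ta; move: an; rewrite -ta ts.
have XE : forall e, Xs (a :: s) u e = sg (e a) * u a + Xs s u e.
  by move=> e; rewrite /Xs big_cons.
have qE : qs (a :: s) u = u a ^+ 2 + qs s u by rewrite /qs big_cons.
have p2 : forall b x y, (sg b * y + x) ^+ 2 = x ^+ 2 + y ^+ 2 + (2 * y * x) * sg b.
  by move=> [] x y /=; rewrite /sg; ring.
have p4 : forall b x y, (sg b * y + x) ^+ 4 = x ^+ 4 + 6 * y ^+ 2 * x ^+ 2 + y ^+ 4
     + (4 * y * x ^+ 3 + 4 * y ^+ 3 * x) * sg b.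
  by move=> [] x y /=; rewrite /sg; ring.
have S2 : \sum_e Xs (a :: s) u e ^+ 2 = NP * qs (a :: s) u.
  under eq_bigr do rewrite XE p2.
  rewrite !big_split /= odd0; last by move=> e; rewrite inv.
  by rewrite IH2 sumc qE; ring.
split => //.
under eq_bigr do rewrite XE p4.
rewrite !big_split /= odd0; last by move=> e; rewrite inv.
rewrite -mulr_sumr IH2 sumc qE.
have q0 := qs_ge0 s u; have N0 := NP_gt0.
have u0 : 0 <= u a ^+ 2 by rewrite sqr_ge0.
set q := qs s u in IH4 q0 *; set y := u a ^+ 2 in u0 *.
have -> : u a ^+ 4 = y * y by rewrite /y; ring.
have h : 0 <= NP * (y * y) by rewrite mulr_ge0 // mulr_ge0.
nra.
Qed.

Definition Xr (u : T -> R) e := Xs (enum T) u e.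

Lemma mom2 u : \sum_e Xr u e ^+ 2 = NP * \sum_t u t ^+ 2.
Proof. have [H _] := mom u (enum_uniq T); rewrite /qs big_enum /= in H; exact: H. Qed.

Lemma mom4 u : \sum_e Xr u e ^+ 4 <= 3 * NP * (\sum_t u t ^+ 2) ^+ 2.
Proof. have [_ H] := mom u (enum_uniq T); rewrite /qs big_enum /= in H; exact: H. Qed.

Lemma mom11 u v : \sum_e Xr u e * Xr v e = NP * \sum_t u t * v t.
Proof.
have XD : forall e, Xr (fun t => u t + v t) e = Xr u e + Xr v e.
  by move=> e; rewrite /Xr /Xs -big_split /=; apply: eq_bigr => t _; ring.
have XB : forall e, Xr (fun t => u t - v t) e = Xr u e - Xr v e.
  by move=> e; rewrite /Xr /Xs -sumrB; apply: eq_bigr => t _; ring.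
have := mom2 (fun t => u t + v t); have := mom2 (fun t => u t - v t).
under eq_bigr do rewrite XB; under [X in _ = _ -> X = _ -> _]eq_bigr do rewrite XD.
move=> E1 E2.
have : \sum_e ((Xr u e + Xr v e) ^+ 2 - (Xr u e - Xr v e) ^+ 2) = 4 * \sum_e Xr u e * Xr v e.
  rewrite mulr_sumr; apply: eq_bigr => e _; ring.
rewrite sumrB E1 E2 -mulrBr -sumrB.
have -> : \sum_t ((u t + v t) ^+ 2 - (u t - v t) ^+ 2) = 4 * \sum_t u t * v t.
  rewrite mulr_sumr; apply: eq_bigr => t _; ring.
lra.
Qed.
End Rad.



Lemma cardR (T : finType) (A : {set T}) : (#|A|)%:R = \sum_x ((x \in A)%:R : R).
Proof.
rewrite -sum1_card natr_sum big_mkcond /=; apply: eq_bigr => x _.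
by case: (x \in A).
Qed.

Lemma pw3 (b1 b2 b3 : bool) (d : R) :
  (b1 && b2 && b3)%:R - d * b1%:R * b2%:R = (b3%:R - d) * b1%:R * b2%:R.
Proof. by case: b1; case: b2; case: b3 => /=; ring. Qed.

Section D.
Variables (m n : nat) (M : 'M[bool]_(m, n)).
Definition a i j : R := (M i j)%:R - density M.
Definition F (b : 'I_m -> 'I_n -> R) (x : 'I_m -> R) (y : 'I_n -> R) :=
  \sum_i \sum_j b i j * x i * y j.
Definition ind (T : finType) (X : {set T}) (i : T) : R := (i \in X)%:R.

Lemma disc_F X Y : disc M X Y = F a (ind X) (ind Y).
Proof.
rewrite /disc /ones_sub !RealsE cardR.
rewrite (eq_bigr (fun ij => ((ij.1 \in X) && (ij.2 \in Y) && M ij.1 ij.2)%:R)); last first.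
  by move=> ij _; rewrite inE.
rewrite -(pair_bigA _ (fun i j => ((i \in X) && (j \in Y) && M i j)%:R)) /=.
have E : density M * (\sum_i ind X i) * (\sum_j ind Y j) = \sum_i \sum_j density M * ind X i * ind Y j.
  rewrite [RHS](eq_bigr (fun i => density M * ind X i * \sum_j ind Y j)); last first.
    by move=> i _; rewrite big_distrr.
  by rewrite -big_distrl -big_distrr.
rewrite /F; transitivity (\sum_i \sum_j ((i \in X) && (j \in Y) && M i j)%:R
   - \sum_i \sum_j density M * ind X i * ind Y j).
  by congr (_ - _); rewrite -E !cardR.
rewrite -sumrB; apply: eq_bigr => i _; rewrite -sumrB; apply: eq_bigr => j _.
by rewrite /a /ind pw3.
Qed.

Lemma ones_le : leq (ones M) (m * n)%N.
Proof.
by rewrite /ones (leq_trans (max_card _)) // card_prod !card_ord.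
Qed.

Lemma sum_a : \sum_i \sum_j a i j = 0.
Proof.
have E : \sum_i \sum_j (M i j)%:R = (ones M)%:R :> R.
  rewrite /ones cardR (pair_bigA _ (fun i j => (M i j)%:R)) /=.
  by apply: eq_bigr => ij _; rewrite inE.
rewrite /a; under eq_bigr do rewrite sumrB sumr_const card_ord.
rewrite sumrB E sumr_const card_ord -mulrnA /density.
have [mn0|mn0] := eqVneq (m * n)%N 0%N.
  by move: ones_le; rewrite mn0 leqn0 => /eqP ->; rewrite !RealsE mul0r mul0rn subr0.
rewrite !RealsE mulnC -mulr_natr; field.
by rewrite !pnatr_eq0 -!lt0n -muln_gt0 lt0n.
Qed.

Lemma F_ext b x x' y y' : (forall i, x i = x' i) -> (forall j, y j = y' j) ->
  F b x y = F b x' y'.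
Proof.
by move=> hx hy; apply: eq_bigr => i _; apply: eq_bigr => j _; rewrite hx hy.
Qed.

Lemma F_subl b x1 x2 y : F b (fun i => x1 i - x2 i) y = F b x1 y - F b x2 y.
Proof.
rewrite /F -sumrB; apply: eq_bigr => i _; rewrite -sumrB; apply: eq_bigr => j _; ring.
Qed.

Lemma F_subr b x y1 y2 : F b x (fun j => y1 j - y2 j) = F b x y1 - F b x y2.
Proof.
rewrite /F -sumrB; apply: eq_bigr => i _; rewrite -sumrB; apply: eq_bigr => j _; ring.
Qed.

Lemma F_opp b x y : F (fun i j => - b i j) x y = - F b x y.
Proof.
rewrite /F -sumrN; apply: eq_bigr => i _; rewrite -sumrN; apply: eq_bigr => j _; ring.
Qed.

Lemma F_row b x y : F b x y = \sum_i x i * (\sum_j b i j * y j).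
Proof.
by apply: eq_bigr => i _; rewrite big_distrr; apply: eq_bigr => j _ /=; ring.
Qed.

Lemma F_col b x y : F b x y = \sum_j y j * (\sum_i b i j * x i).
Proof.
rewrite /F exchange_big; apply: eq_bigr => j _; rewrite big_distrr.
by apply: eq_bigr => i _ /=; ring.
Qed.

Lemma ind01 (T : finType) (X : {set T}) i : 0 <= ind X i <= 1.
Proof. by rewrite /ind; case: (i \in X) => /=; rewrite ?mulr1n ?mulr0n lexx ?ler01. Qed.

Lemma lin01 (I : finType) (x c : I -> R) : (forall i, 0 <= x i <= 1) ->
  \sum_i x i * c i <= \sum_i ind [set i | 0 < c i] i * c i.
Proof.
move=> h; apply: ler_sum => i _; rewrite /ind inE.
have /andP[h0 h1] := h i.
case: (ltP 0 (c i)) => hc /=; rewrite ?mulr1n ?mulr0n; nra.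
Qed.

Lemma pick01 b x y : (forall i, 0 <= x i <= 1) -> (forall j, 0 <= y j <= 1) ->
  exists X Y, F b x y <= F b (ind X) (ind Y).
Proof.
move=> hx hy.
set X := [set i | 0 < \sum_j b i j * y j].
have h1 : F b x y <= F b (ind X) y by rewrite !F_row; apply: lin01 hx.
set Y := [set j | 0 < \sum_i b i j * ind X i].
have h2 : F b (ind X) y <= F b (ind X) (ind Y).
  by rewrite !(F_col b (ind X)); apply: lin01 hy.
by exists X, Y; apply: le_trans h1 h2.
Qed.

Lemma disc_le_dp X Y : disc M X Y <= disc_plus M.
Proof.
rewrite /disc_plus; apply: le_trans (le_bigmax _ _ X).
exact: (le_bigmax _ (fun Y => disc M X Y) Y).
Qed.

Lemma ndisc_le_dm X Y : - disc M X Y <= disc_minus M.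
Proof.
rewrite /disc_minus; apply: le_trans (le_bigmax _ _ X).
exact: (le_bigmax _ (fun Y => - disc M X Y) Y).
Qed.

Lemma F_ind0 b y : F b (ind finset.set0) y = 0.
Proof.
by apply: big1 => i _; apply: big1 => j _; rewrite /ind inE /= mulr0n mulr0 mul0r.
Qed.

Lemma dp_ge0 : 0 <= disc_plus M.
Proof. by have := disc_le_dp finset.set0 finset.set0; rewrite disc_F F_ind0. Qed.

Lemma dm_ge0 : 0 <= disc_minus M.
Proof. by have := ndisc_le_dm finset.set0 finset.set0; rewrite disc_F F_ind0 oppr0. Qed.

Lemma le_dp x y : (forall i, 0 <= x i <= 1) -> (forall j, 0 <= y j <= 1) ->
  F a x y <= disc_plus M.
Proof.
move=> hx hy; have [X [Y h]] := pick01 a hx hy.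
by apply: le_trans h _; rewrite -disc_F disc_le_dp.
Qed.

Lemma le_dm x y : (forall i, 0 <= x i <= 1) -> (forall j, 0 <= y j <= 1) ->
  - F a x y <= disc_minus M.
Proof.
move=> hx hy; have [X [Y h]] := pick01 (fun i j => - a i j) hx hy.
rewrite !F_opp in h.
by apply: le_trans h _; rewrite -disc_F ndisc_le_dm.
Qed.

Definition pp (z : R) := if 0 <= z then z else 0.
Definition nn (z : R) := if 0 <= z then 0 else - z.
Lemma ppnn z : z = pp z - nn z.
Proof. by rewrite /pp /nn; case: ifP => _; ring. Qed.
Lemma pp01 z : -1 <= z <= 1 -> 0 <= pp z <= 1.
Proof. by move=> /andP[h1 h2]; rewrite /pp; case: (leP 0 z) => h /=; apply/andP; split; lra. Qed.
Lemma nn01 z : -1 <= z <= 1 -> 0 <= nn z <= 1.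
Proof. by move=> /andP[h1 h2]; rewrite /nn; case: (leP 0 z) => h /=; apply/andP; split; lra. Qed.

Lemma box x y : (forall i, -1 <= x i <= 1) -> (forall j, -1 <= y j <= 1) ->
  F a x y <= 2 * disc_plus M + 2 * disc_minus M.
Proof.
move=> hx hy.
have px : forall i, 0 <= pp (x i) <= 1 by move=> i; apply: pp01.
have nx : forall i, 0 <= nn (x i) <= 1 by move=> i; apply: nn01.
have py : forall j, 0 <= pp (y j) <= 1 by move=> j; apply: pp01.
have ny : forall j, 0 <= nn (y j) <= 1 by move=> j; apply: nn01.
rewrite (F_ext a (x' := fun i => pp (x i) - nn (x i)) (y' := fun j => pp (y j) - nn (y j))); 
  try by move=> *; rewrite -ppnn.
rewrite !F_subl !F_subr.
have := le_dp px py; have := le_dp nx ny; have := le_dm px ny; have := le_dm nx py.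
lra.
Qed.

Lemma indC (T : finType) (X : {set T}) i : ind (~: X) i = 1 - ind X i.
Proof. by rewrite /ind finset.in_setC; case: (i \in X) => /=; rewrite ?mulr1n ?mulr0n; ring. Qed.

Lemma F_compl X Y : F a (ind X) (ind Y) + F a (ind (~: X)) (ind Y) +
  F a (ind X) (ind (~: Y)) + F a (ind (~: X)) (ind (~: Y)) = 0.
Proof.
rewrite /F -!big_split /= -[RHS]sum_a; apply: eq_bigr => i _.
rewrite -!big_split; apply: eq_bigr => j _ /=; rewrite !indC; ring.
Qed.

Lemma dm_le : disc_minus M <= 3 * disc_plus M.
Proof.
have h0 := dp_ge0.
rewrite /disc_minus; apply: bigmax_le => [|X _]; first lra.
apply: bigmax_le => [|Y _]; first lra.
have := F_compl X Y; rewrite -!disc_F.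
have := disc_le_dp (~: X) Y; have := disc_le_dp X (~: Y); have := disc_le_dp (~: X) (~: Y).
lra.
Qed.

Lemma dp_le : disc_plus M <= 3 * disc_minus M.
Proof.
have h0 := dm_ge0.
rewrite /disc_plus; apply: bigmax_le => [|X _]; first lra.
apply: bigmax_le => [|Y _]; first lra.
have := F_compl X Y; rewrite -!disc_F.
have := ndisc_le_dm (~: X) Y; have := ndisc_le_dm X (~: Y); have := ndisc_le_dm (~: X) (~: Y).
lra.
Qed.
End D.



Lemma absdot (T : finType) (v w : T -> R) :
  \sum_t v t ^+ 2 <= 1 -> \sum_t w t ^+ 2 <= 1 -> `|\sum_t v t * w t| <= 1.
Proof.
move=> hv hw; apply: le_trans (ler_norm_sum _ _ _) _.
have : \sum_t `|v t * w t| <= \sum_t (v t ^+ 2 + w t ^+ 2) / 2.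
  apply: ler_sum => t _.
  have := sqr_ge0 (v t - w t); have := sqr_ge0 (v t + w t).
  case: (lerP 0 (v t * w t)) => h; [rewrite ger0_norm // | rewrite ltr0_norm //]; nra.
rewrite -big_distrl big_split /=; lra.
Qed.

Lemma swap3 (I J E : finType) (b : I -> J -> R) (c : R) (f : I -> J -> E -> R) :
  \sum_i \sum_j b i j * (c * \sum_e f i j e) = c * \sum_e \sum_i \sum_j b i j * f i j e.
Proof.
transitivity (\sum_i \sum_j \sum_e c * (b i j * f i j e)).
  apply: eq_bigr => i _; apply: eq_bigr => j _.
  rewrite !big_distrr /=; apply: eq_bigr => e _; ring.
under eq_bigr do rewrite exchange_big.
rewrite exchange_big big_distrr /=; apply: eq_bigr => e _.
rewrite big_distrr /=; apply: eq_bigr => i _.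
by rewrite big_distrr.
Qed.

Definition clip (z : R) := if z <= -7 then -7 else if 7 <= z then 7 else z.
Definition rem (z : R) := z - clip z.

Lemma clip_b z : -7 <= clip z <= 7.
Proof.
rewrite /clip; case: (leP z (-7)) => h1; case: (leP 7 z) => h2 /=; apply/andP; split; lra.
Qed.

Lemma clip2 z : clip z ^+ 2 <= z ^+ 2.
Proof. rewrite /clip; case: (leP z (-7)) => h1; case: (leP 7 z) => h2 /=; nra. Qed.

Lemma rem2 z : 49 * rem z ^+ 2 <= z ^+ 4.
Proof.
have -> : z ^+ 4 = z ^+ 2 * z ^+ 2 by ring.
rewrite /rem /clip; case: (leP z (-7)) => h1; case: (leP 7 z) => h2 /=.
- lra.
- have h3 : 49 <= z ^+ 2 by nra.
  have h4 : (z - -7) ^+ 2 <= z ^+ 2 by nra.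
  nra.
- have h3 : 49 <= z ^+ 2 by nra.
  have h4 : (z - 7) ^+ 2 <= z ^+ 2 by nra.
  nra.
- have -> : z - z = 0 by ring.
  have := sqr_ge0 z; nra.
Qed.

Section Main.
Variables (m n : nat) (M : 'M[bool]_(m, n)).

Definition val (T : finType) (v : 'I_m -> T -> R) (w : 'I_n -> T -> R) :=
  \sum_i \sum_j a M i j * \sum_t v i t * w j t.

Definition S : set R := fun x => exists (T : finType) (v : 'I_m -> T -> R) (w : 'I_n -> T -> R),
  [/\ (forall i, \sum_t v i t ^+ 2 <= 1), (forall j, \sum_t w j t ^+ 2 <= 1) & x = val v w].

Definition K := \sum_i \sum_j `|a M i j|.

Lemma S_ub x : S x -> x <= K.
Proof.
move=> [T [v [w [hv hw ->]]]].
apply: ler_sum => i _; apply: ler_sum => j _.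
apply: le_trans (ler_norm _) _; rewrite normrM ler_piMr //.
exact: absdot.
Qed.

Lemma S0 : S 0.
Proof.
exists bool, (fun _ _ => 0), (fun _ _ => 0); split.
- by move=> i; rewrite big1 // => t _; rewrite expr0n.
- by move=> j; rewrite big1 // => t _; rewrite expr0n.
- rewrite /val big1 // => i _; rewrite big1 // => j _; rewrite big1 ?mulr0 // => t _; rewrite mulr0.
Qed.

Lemma hasS : has_sup S.
Proof. split; first by exists 0; exact: S0. by exists K => x; apply: S_ub. Qed.

Definition G := sup S.

Lemma G_ub x : S x -> x <= G.
Proof. exact: (sup_upper_bound hasS). Qed.

Lemma scaleR (T : finType) (v : 'I_m -> T -> R) (w : 'I_n -> T -> R) :
  (forall i, \sum_t v i t ^+ 2 <= 1) -> (forall j, \sum_t w j t ^+ 2 <= 1/16) ->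
  val v w <= G / 4.
Proof.
move=> hv hw.
have : S (val v (fun j t => 4 * w j t)).
  exists T, v, (fun j t => 4 * w j t); split => // j.
  have -> : \sum_t (4 * w j t) ^+ 2 = 16 * \sum_t w j t ^+ 2.
    by rewrite big_distrr; apply: eq_bigr => t _ /=; ring.
  have := hw j; lra.
have -> : val v (fun j t => 4 * w j t) = 4 * val v w.
  rewrite /val big_distrr; apply: eq_bigr => i _ /=; rewrite big_distrr; apply: eq_bigr => j _ /=.
  have -> : \sum_t v i t * (4 * w j t) = 4 * \sum_t v i t * w j t.
    by rewrite big_distrr; apply: eq_bigr => t _ /=; ring.
  ring.
move/G_ub; lra.
Qed.

Lemma scaleL (T : finType) (v : 'I_m -> T -> R) (w : 'I_n -> T -> R) :
  (forall i, \sum_t v i t ^+ 2 <= 1/16) -> (forall j, \sum_t w j t ^+ 2 <= 1) ->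
  val v w <= G / 4.
Proof.
move=> hv hw.
have : S (val (fun i t => 4 * v i t) w).
  exists T, (fun i t => 4 * v i t), w; split => // i.
  have -> : \sum_t (4 * v i t) ^+ 2 = 16 * \sum_t v i t ^+ 2.
    by rewrite big_distrr; apply: eq_bigr => t _ /=; ring.
  have := hv i; lra.
have -> : val (fun i t => 4 * v i t) w = 4 * val v w.
  rewrite /val big_distrr; apply: eq_bigr => i _ /=; rewrite big_distrr; apply: eq_bigr => j _ /=.
  have -> : \sum_t (4 * v i t) * w j t = 4 * \sum_t v i t * w j t.
    by rewrite big_distrr; apply: eq_bigr => t _ /=; ring.
  ring.
move/G_ub; lra.
Qed.

Definition B := 2 * disc_plus M + 2 * disc_minus M.

Lemma box7 x y : (forall i, -7 <= x i <= 7) -> (forall j, -7 <= y j <= 7) ->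
  F (a M) x y <= 49 * B.
Proof.
move=> hx hy.
have -> : F (a M) x y = 49 * F (a M) (fun i => x i / 7) (fun j => y j / 7).
  rewrite /F big_distrr; apply: eq_bigr => i _ /=; rewrite big_distrr; apply: eq_bigr => j _ /=.
  by field.
rewrite /B; have : F (a M) (fun i => x i / 7) (fun j => y j / 7) <= 2 * disc_plus M + 2 * disc_minus M.
  apply: box.
    by move=> ii; have /andP[h1 h2] := hx ii; apply/andP; split; lra.
  by move=> jj; have /andP[h1 h2] := hy jj; apply/andP; split; lra.

lra.
Qed.

Lemma mainS x : S x -> x <= 49 * B + G / 2.
Proof.
move=> [T [v [w [hv hw ->]]]].
pose N := NP T.
have N0 : 0 < N := NP_gt0 T.
pose k := Num.sqrt (N^-1).
have k2 : k ^+ 2 = N^-1 by rewrite sqr_sqrtr // invr_ge0 ltW.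
have normk : forall f : {ffun T -> bool} -> R,
    \sum_e (k * f e) ^+ 2 = N^-1 * \sum_e f e ^+ 2.
  by move=> f; rewrite big_distrr; apply: eq_bigr => e _ /=; rewrite exprMn k2.
have inner : forall i j, \sum_t v i t * w j t = N^-1 * \sum_e Xr (v i) e * Xr (w j) e.
  by move=> i j; rewrite mom11 mulrA mulVf ?mul1r // gt_eqF.
have kk : forall f g : {ffun T -> bool} -> R,
    \sum_e (k * f e) * (k * g e) = N^-1 * \sum_e f e * g e.
  by move=> f g; rewrite big_distrr; apply: eq_bigr => e _ /=; rewrite -k2; ring.
have nX : forall u : T -> R, \sum_t u t ^+ 2 <= 1 -> \sum_e (k * Xr u e) ^+ 2 <= 1.
  by move=> u hu; rewrite normk mom2 mulrA mulVf ?mul1r // gt_eqF.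
have nC : forall u : T -> R, \sum_t u t ^+ 2 <= 1 -> \sum_e (k * clip (Xr u e)) ^+ 2 <= 1.
  move=> u hu; apply: le_trans (nX u hu); rewrite !normk; apply: ler_wpM2l.
    by rewrite invr_ge0 ltW.
  by apply: ler_sum => e _; apply: clip2.
have nR : forall u : T -> R, \sum_t u t ^+ 2 <= 1 -> \sum_e (k * rem (Xr u e)) ^+ 2 <= 1/16.
  move=> u hu; rewrite normk.
  have h1 : \sum_e rem (Xr u e) ^+ 2 <= (\sum_e Xr u e ^+ 4) / 49.
    rewrite big_distrl /=; apply: ler_sum => e _; have := rem2 (Xr u e); lra.
  have h2 := mom4 u.
  have q0 : 0 <= \sum_t u t ^+ 2 by apply: sumr_ge0 => t _; apply: sqr_ge0.
  set q := \sum_t u t ^+ 2 in hu h2 q0.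
  set s := \sum_e rem (Xr u e) ^+ 2 in h1 *.
  have hq : q ^+ 2 <= 1 by nra.
  have hs : s <= 3 * N / 49 by apply: le_trans h1 _; rewrite ler_pdivrMr //; nra.
  have -> : N^-1 * s = s / N by ring.
  rewrite ler_pdivrMr //; lra.
pose A1 := \sum_i \sum_j a M i j * (N^-1 * \sum_e clip (Xr (v i) e) * clip (Xr (w j) e)).
pose A2 := val (fun i e => k * clip (Xr (v i) e)) (fun j e => k * rem (Xr (w j) e)).
pose A3 := val (fun i e => k * rem (Xr (v i) e)) (fun j e => k * Xr (w j) e).
have E : val v w = A1 + A2 + A3.
  rewrite /A1 /A2 /A3 /val -!big_split; apply: eq_bigr => i _ /=.
  rewrite -!big_split; apply: eq_bigr => j _ /=.
  rewrite inner !kk.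
  have -> : \sum_e Xr (v i) e * Xr (w j) e =
      \sum_e clip (Xr (v i) e) * clip (Xr (w j) e) +
      \sum_e clip (Xr (v i) e) * rem (Xr (w j) e) +
      \sum_e rem (Xr (v i) e) * Xr (w j) e.
    by rewrite -!big_split; apply: eq_bigr => e _ /=; rewrite /rem; ring.
  ring.
have h1 : A1 <= 49 * B.
  rewrite /A1 swap3.
  have : \sum_e \sum_i \sum_j a M i j * (clip (Xr (v i) e) * clip (Xr (w j) e)) <= \sum_(e : {ffun T -> bool}) 49 * B.
    apply: ler_sum => e _.
    have := @box7 (fun i => clip (Xr (v i) e)) (fun j => clip (Xr (w j) e)) (fun i => clip_b _) (fun j => clip_b _).
    congr (_ <= _); apply: eq_bigr => i _; apply: eq_bigr => j _ /=; ring.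
  rewrite sumc -/N => h.
  have -> : 49 * B = N^-1 * (N * (49 * B)).
  by rewrite mulKf // gt_eqF.
  by rewrite ler_wpM2l // invr_ge0 ltW.
have h2 : A2 <= G / 4.
  by apply: scaleR => [i|j]; [apply: nC | apply: nR].
have h3 : A3 <= G / 4.
  by apply: scaleL => [i|j]; [apply: nR | apply: nX].
rewrite E; lra.
Qed.

Lemma G_le : G <= 98 * B.
Proof.
have h : G <= 49 * B + G / 2.
  apply: ge_sup; first by exists 0; exact: S0.
  by move=> x; apply: mainS.
lra.
Qed.

End Main.



Section Fin.
Variables (m n : nat) (M : 'M[bool]_(m, n)).

Lemma vals_S y : pdisc0_values M y -> S M y.
Proof.
move=> [v [w [hv [hw ->]]]].
exists 'I_(m + n), (fun i t => v i 0 t), (fun j t => w j 0 t); split.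
- by move=> i; rewrite (eq_bigr (fun t => v i 0 t * v i 0 t)) => [|t _]; [exact: hv | rewrite expr2].
- by move=> j; rewrite (eq_bigr (fun t => w j 0 t * w j 0 t)) => [|t _]; [exact: hw | rewrite expr2].
- rewrite /val big_distrr -sumrB; apply: eq_bigr => i _ /=.
  rewrite big_distrr -sumrB; apply: eq_bigr => j _ /=.
  by rewrite /a /dotv !RealsE; ring.
Qed.

Lemma d00 : dotv (0 : 'rV[R]_(m + n)) 0 = 0.
Proof. by rewrite /dotv big1 // => k _; rewrite mxE mul0r. Qed.

Lemma vals0 : pdisc0_values M 0.
Proof.
exists (fun _ => 0), (fun _ => 0); split; [|split].
- by move=> i; rewrite d00.
- by move=> j; rewrite d00.
- rewrite /= d00 (eq_bigr (fun _ => 0)) => [|i _]; last by rewrite big1 // => j _; rewrite mulr0.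
  by rewrite big1 // (eq_bigr (fun _ => 0)) => [|i _]; [rewrite big1 // mulr0 subr0 | rewrite big1].
Qed.

Lemma has_vals : has_sup (pdisc0_values M).
Proof.
split; first by exists 0; exact: vals0.
by exists (G M) => y /vals_S /G_ub.
Qed.

Lemma pdisc_le_G : pdisc0 M <= G M.
Proof.
apply: ge_sup; first by exists 0; exact: vals0.
by move=> y /vals_S /G_ub.
Qed.

Lemma pdisc_ge0 : 0 <= pdisc0 M.
Proof. exact: (sup_upper_bound has_vals) vals0. Qed.

Lemma F_vals x y : (forall i, x i ^+ 2 <= 1) -> (forall j, y j ^+ 2 <= 1) ->
  F (a M) x y <= pdisc0 M.
Proof.
move=> hx hy.
case: (posnP (m + n)) => [h0|hpos].
  rewrite /F big1; first exact: pdisc_ge0.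
  move=> i _; exfalso; move: (leq_trans (ltn_ord i) (leq_addr n m)).
  by rewrite h0.
pose k0 : 'I_(m + n) := Ordinal hpos.
pose e : 'rV[R]_(m + n) := \row_t ((t == k0)%:R : R).
have de : forall c d, dotv (c *: e) (d *: e) = c * d.
  move=> c d; rewrite /dotv (bigD1 k0) //= big1 => [|t /negbTE tk].
    by rewrite !mxE eqxx /= mulr1n; ring.
  by rewrite !mxE tk /= mulr0n; ring.
apply: (sup_upper_bound has_vals).
exists (fun i => x i *: e), (fun j => y j *: e); split; [|split].
- by move=> i; rewrite de -expr2.
- by move=> j; rewrite de -expr2.
- rewrite /F big_distrr -sumrB; apply: eq_bigr => i _ /=.
  rewrite big_distrr -sumrB; apply: eq_bigr => j _ /=.
  by rewrite !de /a !RealsE; ring.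
Qed.

Lemma ind2 (T : finType) (X : {set T}) i : ind X i ^+ 2 <= 1.
Proof. by have /andP[h0 h1] := ind01 X i; nra. Qed.

Lemma dp_le_pdisc : disc_plus M <= pdisc0 M.
Proof.
rewrite /disc_plus; apply: bigmax_le => [|X _]; first exact: pdisc_ge0.
apply: bigmax_le => [|Y _]; first exact: pdisc_ge0.
by rewrite disc_F; apply: F_vals => i; apply: ind2.
Qed.

Lemma dm_le_pdisc : disc_minus M <= pdisc0 M.
Proof.
rewrite /disc_minus; apply: bigmax_le => [|X _]; first exact: pdisc_ge0.
apply: bigmax_le => [|Y _]; first exact: pdisc_ge0.
have -> : - disc M X Y = F (a M) (ind X) (fun j => - ind Y j).
  rewrite disc_F /F -sumrN; apply: eq_bigr => i _; rewrite -sumrN; apply: eq_bigr => j _; ring.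
apply: F_vals => [i|j]; first exact: ind2.
by rewrite sqrrN; apply: ind2.
Qed.
End Fin.

Theorem claim2p5 :
  exists c1 c2 : R, 0 < c1 /\ 0 < c2 /\
    forall (m n : nat) (M : 'M[bool]_(m, n)),
      [/\ c1 * disc_plus M <= pdisc0 M, pdisc0 M <= c2 * disc_plus M,
          c1 * disc_minus M <= pdisc0 M & pdisc0 M <= c2 * disc_minus M].
Proof.
exists 1, 784; split; first lra; split; first lra.
move=> m n M.
have h1 := dp_le_pdisc M; have h2 := dm_le_pdisc M.
have h3 := pdisc_le_G M; have h4 := G_le M; rewrite /B in h4.
have h5 := dm_le M; have h6 := dp_le M.
split; lra.
Qed.
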